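(* Let $G$ be an infinite, connected, locally finite graph. If $S$ is a finite set of vertices of $G$ and $U$ is an infinite set of vertices of $G$, then $S$ does not doubly resolve $U$.
   Context: $d$ denotes shortest-path distance in $G$. Two vertices $x,y$ doubly resolve a pair of vertices $u,v$ if $d(u,x)-d(v,x)\neq d(u,y)-d(v,y)$. For sets $S,U$ of vertices, $S$ doubly resolves $U$ if every pair of distinct vertices of $U$ is doubly resolved by some two vertices of $S$. *)

(* Defs.v *)
From Stdlib Require Import Arith ZArith List ClassicalEpsilon.
Import ListNotations.

Definition simple_graph {V : Type} (adj : V -> V -> Prop) : Prop :=
  (forall x y, adj x y -> adj y x) /\ (forall x, ~ adj x x).

Inductive walk {V : Type} (adj : V -> V -> Prop) : V -> V -> nat -> Prop :=
| walk_nil : forall x, walk adj x x 0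
| walk_cons : forall x y z n, adj x y -> walk adj y z n -> walk adj x z (S n).

Definition connected {V : Type} (adj : V -> V -> Prop) : Prop :=
  forall x y, exists n, walk adj x y n.

Definition locally_finite {V : Type} (adj : V -> V -> Prop) : Prop :=
  forall v, exists l : list V, forall w, adj v w -> In w l.

Definition finite_set {V : Type} (A : V -> Prop) : Prop :=
  exists l : list V, forall x, A x -> In x l.

Definition infinite_set {V : Type} (A : V -> Prop) : Prop := ~ finite_set A.

Definition infinite_type (V : Type) : Prop := infinite_set (fun _ : V => True).

Definition is_dist {V : Type} (adj : V -> V -> Prop) (x y : V) (n : nat) : Prop :=
  walk adj x y n /\ forall m, walk adj x y m -> n <= m.

(* Shortest-path distance d(x,y) (meaningful when x and y are connected). *)
Definition dist {V : Type} (adj : V -> V -> Prop) (x y : V) : nat :=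
  epsilon (inhabits 0) (is_dist adj x y).

Definition doubly_resolve_pair {V : Type} (adj : V -> V -> Prop) (x y u v : V) : Prop :=
  (Z.of_nat (dist adj u x) - Z.of_nat (dist adj v x)
   <> Z.of_nat (dist adj u y) - Z.of_nat (dist adj v y))%Z.

Definition doubly_resolves {V : Type} (adj : V -> V -> Prop) (S U : V -> Prop) : Prop :=
  forall u v, U u -> U v -> u <> v ->
    exists x y, S x /\ S y /\ doubly_resolve_pair adj x y u v.

(* Main.v *)
Require Import Defs.
From Stdlib Require Import Arith ZArith List ClassicalEpsilon.
From Stdlib Require Import Classical Lia.
Import ListNotations.

Lemma min_exists (P : nat -> Prop) : (exists n, P n) -> exists n, P n /\ forall m, P m -> n <= m.
Proof.
  intros [n Hn]. revert Hn. induction n as [n IH] using lt_wf_ind. intros Hn.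
  destruct (classic (exists m, m < n /\ P m)) as [[m [Hm Pm]]|H].
  - exact (IH m Hm Pm).
  - exists n. split; [exact Hn|]. intros m Pm.
    destruct (le_lt_dec n m); [assumption|]. exfalso; apply H; eauto.
Qed.

Lemma walk_app {V} (adj : V -> V -> Prop) x y z n m :
  walk adj x y n -> walk adj y z m -> walk adj x z (n + m).
Proof.
  induction 1; intros; simpl; [assumption|]. econstructor; eauto.
Qed.

Lemma dist_spec {V} (adj : V -> V -> Prop) (Hc : connected adj) x y :
  is_dist adj x y (dist adj x y).
Proof.
  unfold dist. apply epsilon_spec. apply min_exists. apply Hc.
Qed.

Lemma tri {V} (adj : V -> V -> Prop) (Hc : connected adj) a b c :
  dist adj a c <= dist adj a b + dist adj b c.
Proof.
  destruct (dist_spec adj Hc a c) as [_ M].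
  destruct (dist_spec adj Hc a b) as [W1 _].
  destruct (dist_spec adj Hc b c) as [W2 _].
  apply M. eapply walk_app; eauto.
Qed.

Lemma inj_finite {V T} (g : V -> T) (L : list T) : forall A : V -> Prop,
  (forall u v, A u -> A v -> g u = g v -> u = v) ->
  (forall u, A u -> In (g u) L) -> finite_set A.
Proof.
  induction L as [|c L IH]; intros A Hi HL.
  - exists []. intros x Ax. exact (HL x Ax).
  - destruct (classic (exists a, A a /\ g a = c)) as [[a [Aa Ga]]|H].
    + destruct (IH (fun x => A x /\ g x <> c)) as [l Hl].
      * intros u v [] []; auto.
      * intros u [Au Gu]. destruct (HL u Au); [congruence|assumption].
      * exists (a :: l). intros x Ax.
        destruct (classic (g x = c)).
        -- left. symmetry. apply Hi; congruence.
        -- right. apply Hl. auto.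
    + apply IH; auto. intros u Au. destruct (HL u Au); [|assumption].
      exfalso; apply H; eauto.
Qed.

Fixpoint allvecs (n B : nat) : list (list Z) :=
  match n with
  | 0 => [[]]
  | S n => flat_map (fun z => map (cons z) (allvecs n B))
             (map (fun k => Z.of_nat k - Z.of_nat B)%Z (seq 0 (2 * B + 1)))
  end.

Lemma allvecs_in B : forall v, Forall (fun z => - Z.of_nat B <= z <= Z.of_nat B)%Z v ->
  In v (allvecs (length v) B).
Proof.
  induction v as [|z v IH]; intros HF; simpl; [auto|].
  inversion HF; subst. apply in_flat_map. exists z. split.
  - apply in_map_iff. exists (Z.to_nat (z + Z.of_nat B)). split; [lia|].
    apply in_seq. lia.
  - apply in_map. auto.
Qed.

Fixpoint lsum {V} (h : V -> nat) (l : list V) : nat :=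
  match l with [] => 0 | x :: l => h x + lsum h l end.

Lemma lsum_in {V} (h : V -> nat) l x : In x l -> h x <= lsum h l.
Proof. induction l as [|a l IHl]; simpl; intros Hin; [destruct Hin|]. destruct Hin as [->|Hin]; [lia|]. specialize (IHl Hin); lia. Qed.

Theorem lemma5 (V : Type) (adj : V -> V -> Prop)
  (Hsimple : simple_graph adj) (Hinf : infinite_type V)
  (Hconn : connected adj) (Hlf : locally_finite adj)
  (S U : V -> Prop) (HS : finite_set S) (HU : infinite_set U) :
  ~ doubly_resolves adj S U.
Proof.
  intros HD. apply HU.
  destruct (classic (exists s0 : V, True)) as [[s0 _]|Hn].
  2:{ exists []. intros x _. exfalso; eauto. }
  destruct HS as [lS HlS].
  set (f := fun u x => (Z.of_nat (dist adj u x) - Z.of_nat (dist adj u s0))%Z).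
  set (B := lsum (fun x => dist adj x s0 + dist adj s0 x) lS).
  apply (inj_finite (fun u => map (f u) lS) (allvecs (length lS) B)).
  - intros u v Uu Uv Heq.
    destruct (classic (u = v)) as [|Hne]; [assumption|exfalso].
    destruct (HD u v Uu Uv Hne) as [x [y [Sx [Sy Hr]]]].
    assert (Ex : f u x = f v x).
    { assert (Hx := HlS x Sx).
      assert (In (f u x) (map (f v) lS)) by (rewrite <- Heq; apply in_map; auto).
      clear -Heq Hx.
      induction lS as [|a l IHl]; [destruct Hx|].
      simpl in Heq. injection Heq as H1 H2. destruct Hx; subst; auto. }
    assert (Ey : f u y = f v y).
    { assert (Hy := HlS y Sy).
      clear -Heq Hy.
      induction lS as [|a l IHl]; [destruct Hy|].
      simpl in Heq. injection Heq as H1 H2. destruct Hy; subst; auto. }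
    unfold f, doubly_resolve_pair in *. lia.
  - intros u _.
    rewrite <- (map_length (f u) lS). apply allvecs_in.
    apply Forall_forall. intros z Hz. apply in_map_iff in Hz as [x [<- Hx]].
    pose proof (lsum_in (fun x => dist adj x s0 + dist adj s0 x) lS x Hx).
    fold B in H. simpl in H.
    pose proof (tri adj Hconn u s0 x). pose proof (tri adj Hconn u x s0).
    unfold f. lia.
Qed.
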